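(* Let $n\ge2$ and let $\mathrm S=\mathrm S_1\cup\mathrm S_2\cup\mathrm S_3$ with $\mathrm S_1\subseteq\{B_{ij}:1\le i<j\le n\}$, $\mathrm S_2\subseteq\{C_{ij}:1\le i<j\le n\}$, $\mathrm S_3\subseteq\{D_{ij}:1\le i<j\le n\}$, and let $\mathscr G_{\mathrm S}$ be its associated edge-colored multigraph. Then the real Lie algebra generated by $\mathrm S$ equals $\mathfrak{su}(n)$ if and only if one of the following holds: (i) $\mathscr G_{\mathrm S}$ has edges of at least two colors, and the Blue edges together with the node set $\{1,\dots,n\}$ form a connected graph; (ii) $\mathscr G_{\mathrm S}$ is connected and has a self-loop; (iii) $\mathscr G_{\mathrm S}$ is connected and has a cycle containing an odd number of Red edges.
   Context: $E_{ij}$ is the $n\times n$ matrix unit; $B_{ij}=E_{ij}-E_{ji}$, $C_{ij}=\mathrm i(E_{ij}+E_{ji})$, $D_{ij}=\mathrm i(E_{ii}-E_{jj})$; $\mathfrak{su}(n)$ is the real Lie algebra of traceless skew-Hermitian $n\times n$ matrices with bracket $[X,Y]=XY-YX$. The edge-colored multigraph $\mathscr G_{\mathrm S}$ has node set $\{1,\dots,n\}$, a Blue edge $\{i,j\}$ for each $B_{ij}\in\mathrm S_1$, a Red edge $\{i,j\}$ for each $C_{ij}\in\mathrm S_2$, and Green self-loops $\{i,i\}$ and $\{j,j\}$ for each $D_{ij}\in\mathrm S_3$; edges with same endpoints but different colors are distinct. A walk alternates nodes and edges with consecutive endpoints; a cycle is a closed walk; connected means any two nodes are joined by a walk. *)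

(* Defs.v *)
From mathcomp Require Import all_boot all_order all_algebra all_reals.
From mathcomp Require Import complex.
Set Implicit Arguments. Unset Strict Implicit. Unset Printing Implicit Defensive.
Import Order.TTheory GRing.Theory Num.Theory.
Local Open Scope ring_scope.

Section Defs.
Variables (R : realType) (n : nat).
Local Notation C := (R[i]).
Local Notation M := ('M[C]_n).

Definition matB (i j : 'I_n) : M := delta_mx i j - delta_mx j i.
Definition matC (i j : 'I_n) : M := (Complex 0 1 : C) *: (delta_mx i j + delta_mx j i).
Definition matD (i j : 'I_n) : M := (Complex 0 1 : C) *: (delta_mx i i - delta_mx j j).

Definition in_su (A : M) : Prop := (map_mx Num.conj A)^T = - A /\ \tr A = 0.

Inductive lie_gen (S : M -> Prop) : M -> Prop :=
| lg_gen A : S A -> lie_gen S A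
| lg_zero : lie_gen S 0
| lg_add A B : lie_gen S A -> lie_gen S B -> lie_gen S (A + B)
| lg_scale (r : R) A : lie_gen S A -> lie_gen S ((Complex r 0 : C) *: A)
| lg_br A B : lie_gen S A -> lie_gen S B -> lie_gen S (A *m B - B *m A).

Definition gen_set (E1 E2 E3 : {set 'I_n * 'I_n}) (A : M) : Prop :=
  (exists2 p, p \in E1 & A = matB p.1 p.2) \/
  (exists2 p, p \in E2 & A = matC p.1 p.2) \/
  (exists2 p, p \in E3 & A = matD p.1 p.2).

Inductive color := Blue | Red | Green.

Definition is_red (c : color) : bool := if c is Red then true else false.
Definition is_blue (c : color) : bool := if c is Blue then true else false.

Definition colored_edge (E1 E2 E3 : {set 'I_n * 'I_n}) (c : color) (x y : 'I_n) : bool :=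
  match c with
  | Blue => ((x, y) \in E1) || ((y, x) \in E1)
  | Red => ((x, y) \in E2) || ((y, x) \in E2)
  | Green => (x == y) && [exists z, ((x, z) \in E3) || ((z, x) \in E3)]
  end.

Fixpoint is_walk (E1 E2 E3 : {set 'I_n * 'I_n}) (x : 'I_n) (s : seq (color * 'I_n)) : bool :=
  match s with
  | [::] => true
  | (c, y) :: s' => colored_edge E1 E2 E3 c x y && is_walk E1 E2 E3 y s'
  end.

Definition walk_end (x : 'I_n) (s : seq (color * 'I_n)) : 'I_n := last x (map snd s).

Definition connected_graph (E1 E2 E3 : {set 'I_n * 'I_n}) : Prop :=
  forall x y : 'I_n, exists s, is_walk E1 E2 E3 x s /\ walk_end x s = y.

Definition blue_connected (E1 E2 E3 : {set 'I_n * 'I_n}) : Prop :=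
  forall x y : 'I_n, exists s, [/\ is_walk E1 E2 E3 x s, all (fun p => is_blue p.1) s
                                 & walk_end x s = y].

Definition has_color (E1 E2 E3 : {set 'I_n * 'I_n}) (c : color) : Prop :=
  exists x y, colored_edge E1 E2 E3 c x y.

Definition at_least_two_colors (E1 E2 E3 : {set 'I_n * 'I_n}) : Prop :=
  exists c1 c2, [/\ c1 <> c2, has_color E1 E2 E3 c1 & has_color E1 E2 E3 c2].

Definition has_self_loop (E1 E2 E3 : {set 'I_n * 'I_n}) : Prop :=
  exists c x, colored_edge E1 E2 E3 c x x.

Definition has_odd_red_cycle (E1 E2 E3 : {set 'I_n * 'I_n}) : Prop :=
  exists x s, [/\ is_walk E1 E2 E3 x s, walk_end x s = x & odd (count (fun p => is_red p.1) s)].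

End Defs.

(* Main.v *)
Require Import Defs.
From mathcomp Require Import all_boot all_order all_algebra all_reals.
From mathcomp Require Import complex ring.
Import Order.TTheory GRing.Theory Num.Theory.
Local Open Scope ring_scope.
Set Implicit Arguments. Unset Strict Implicit. Unset Printing Implicit Defensive.
From Stdlib Require Classical.
Section S.
Variables (R : realType) (n : nat).
Local Notation C := (R[i]).
Local Notation M := ('M[C]_n).
Local Notation dl := (@delta_mx C n n).
Local Notation mB := (@matB R n).
Local Notation mC := (@matC R n).
Local Notation mD := (@matD R n).
Definition ii : C := Complex 0 1.
Definition comm (X Y : M) := X *m Y - Y *m X.
Definition Cp (a b : 'I_n) : M := dl a b + dl b a.
Definition Dp (a b : 'I_n) : M := dl a a - dl b b.

Ltac expand := rewrite /comm /matB /Cp /Dp ?mulmxDl ?mulmxDr ?mulmxBl ?mulmxBr ?mulmxN ?mulNmx ?mul_delta_mx_cond.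

Ltac casebool := repeat match goal with
 | H : is_true (?x != ?x) |- _ => by rewrite eqxx in H
 | |- context [?x == ?x] => rewrite eqxx
 | |- context [?x == ?y] => let E := fresh "E" in case: (eqVneq x y) => E; [subst | rewrite ?(negbTE E)]
 end.

Ltac entry := apply/matrixP => u v; rewrite !(mxE, mulmxnE); casebool; rewrite /=; ring.

Lemma cBB a b c : a != b -> b != c -> a != c -> comm (mB a b) (mB b c) = mB a c.
Proof. by move=> *; expand; entry. Qed.
Lemma cBCp a b c : a != b -> b != c -> a != c -> comm (mB a b) (Cp b c) = Cp a c.
Proof. by move=> *; expand; entry. Qed.
Lemma cCpB a b c : a != b -> b != c -> a != c -> comm (Cp a b) (mB b c) = Cp a c.
Proof. by move=> *; expand; entry. Qed.
Lemma cCpCp a b c : a != b -> b != c -> a != c -> comm (Cp a b) (Cp b c) = mB a c.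
Proof. by move=> *; expand; entry. Qed.
Lemma cBCp2 a b : a != b -> comm (mB a b) (Cp a b) = Dp a b *+ 2.
Proof. by move=> *; expand; entry. Qed.
Lemma cDpB a b : a != b -> comm (Dp a b) (mB a b) = Cp a b *+ 2.
Proof. by move=> *; expand; entry. Qed.
Lemma cDpCp a b : a != b -> comm (Dp a b) (Cp a b) = mB a b *+ 2.
Proof. by move=> *; expand; entry. Qed.
Lemma cDpB3 a b c : a != b -> b != c -> a != c -> comm (Dp a b) (mB b c) = - Cp b c.
Proof. by move=> *; expand; entry. Qed.
Lemma cDpCp3 a b c : a != b -> b != c -> a != c -> comm (Dp a b) (Cp b c) = - mB b c.
Proof. by move=> *; expand; entry. Qed.
Lemma mBN a b : mB b a = - mB a b.
Proof. by rewrite /matB opprB. Qed.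
Lemma CpC a b : Cp b a = Cp a b.
Proof. by rewrite /Cp addrC. Qed.
End S.

Section S2.
Variables (R : realType) (n : nat).
Local Notation C := (R[i]).
Local Notation M := ('M[C]_n).
Local Notation mB := (@matB R n).
Local Notation mC := (@matC R n).
Local Notation mD := (@matD R n).
Local Notation ii := (@ii R).
Local Notation comm := (@comm R n).
Local Notation Cp := (@Cp R n).
Local Notation Dp := (@Dp R n).

Lemma iiM : ii * ii = -1.
Proof. by rewrite -expr2 sqr_i. Qed.
Lemma commZl k X Y : comm (k *: X) Y = k *: comm X Y.
Proof. by rewrite /comm -scalemxAl -scalemxAr scalerBr. Qed.
Lemma commZr k X Y : comm X (k *: Y) = k *: comm X Y.
Proof. by rewrite /comm -scalemxAl -scalemxAr scalerBr. Qed.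
Lemma mCE a b : mC a b = ii *: Cp a b. Proof. by []. Qed.
Lemma mDE a b : mD a b = ii *: Dp a b. Proof. by []. Qed.

Lemma cBC a b c : a != b -> b != c -> a != c -> comm (mB a b) (mC b c) = mC a c.
Proof. by move=> *; rewrite !mCE commZr cBCp. Qed.
Lemma cCB a b c : a != b -> b != c -> a != c -> comm (mC a b) (mB b c) = mC a c.
Proof. by move=> *; rewrite !mCE commZl cCpB. Qed.
Lemma cCC a b c : a != b -> b != c -> a != c -> comm (mC a b) (mC b c) = - mB a c.
Proof. by move=> *; rewrite !mCE commZl commZr scalerA iiM cCpCp // scaleN1r. Qed.
Lemma cBC2 a b : a != b -> comm (mB a b) (mC a b) = mD a b *+ 2.
Proof. by move=> *; rewrite !mCE mDE commZr cBCp2 // scalerMnr. Qed.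
Lemma cDB a b : a != b -> comm (mD a b) (mB a b) = mC a b *+ 2.
Proof. by move=> *; rewrite !mCE mDE commZl cDpB // scalerMnr. Qed.
Lemma cDC a b : a != b -> comm (mD a b) (mC a b) = - (mB a b *+ 2).
Proof. by move=> *; rewrite !mCE mDE commZl commZr scalerA iiM cDpCp // scaleN1r. Qed.
Lemma cDB3 a b c : a != b -> b != c -> a != c -> comm (mD a b) (mB b c) = - mC b c.
Proof. by move=> *; rewrite !mCE mDE commZl cDpB3 // scalerN. Qed.
Lemma cDC3 a b c : a != b -> b != c -> a != c -> comm (mD a b) (mC b c) = mB b c.
Proof. by move=> *; rewrite !mCE mDE commZl commZr scalerA iiM cDpCp3 // scaleN1r opprK. Qed.
Lemma mCC a b : mC b a = mC a b.
Proof. by rewrite !mCE CpC. Qed.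

Section L.
Variable S : M -> Prop.
Local Notation L := (lie_gen S).
Lemma cm1 : (Complex (-1) 0 : C) = -1.
Proof. by apply/eqP; rewrite eq_complex /= oppr0 !eqxx. Qed.
Lemma lgN X : L X -> L (- X).
Proof. by move=> h; rewrite -scaleN1r -cm1; apply: lg_scale. Qed.
Lemma lgB X Y : L X -> L Y -> L (X - Y).
Proof. by move=> h1 h2; apply: lg_add => //; apply: lgN. Qed.
Lemma lgC X Y : L X -> L Y -> L (comm X Y).
Proof. exact: lg_br. Qed.
Lemma chalf : (Complex (1/2) 0 : C) * 2%:R = 1.
Proof. by apply/eqP; rewrite eq_complex /=; apply/andP; split; apply/eqP; field. Qed.
Lemma lg2 X : L (X *+ 2) -> L X.
Proof. by move=> h; rewrite -[X]scale1r -chalf -scalerA scaler_nat; apply: lg_scale. Qed.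
End L.
End S2.

Section G.
Variables (R : realType) (n : nat) (E1 E2 E3 : {set 'I_n * 'I_n}).
Hypothesis h1 : forall p, p \in E1 -> (p.1 < p.2)%N.
Hypothesis h2 : forall p, p \in E2 -> (p.1 < p.2)%N.
Hypothesis h3 : forall p, p \in E3 -> (p.1 < p.2)%N.
Local Notation C := (R[i]).
Local Notation M := ('M[C]_n).
Local Notation mB := (@matB R n).
Local Notation mC := (@matC R n).
Local Notation mD := (@matD R n).
Local Notation comm := (@comm R n).
Local Notation S := (@gen_set R n E1 E2 E3).
Local Notation L := (lie_gen S).
Local Notation edge := (colored_edge E1 E2 E3).
Local Notation walk := (is_walk E1 E2 E3).
Local Notation nred s := (odd (count (fun q : color * 'I_n => is_red q.1) s)).

Lemma ltn_neq (x y : 'I_n) : (x < y)%N -> x != y.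
Proof. by move=> lt; apply/eqP => e; move: lt; rewrite e ltnn. Qed.

Lemma edgeB x y : edge Blue x y -> x != y /\ L (mB x y).
Proof.
case/orP => h.
  split; first exact: ltn_neq (h1 h).
  by apply: lg_gen; left; exists (x, y).
split; first by rewrite eq_sym; exact: ltn_neq (h1 h).
by rewrite mBN; apply: lgN; apply: lg_gen; left; exists (y, x).
Qed.

Lemma edgeR x y : edge Red x y -> x != y /\ L (mC x y).
Proof.
case/orP => h.
  split; first exact: ltn_neq (h2 h).
  by apply: lg_gen; right; left; exists (x, y).
split; first by rewrite eq_sym; exact: ltn_neq (h2 h).
by rewrite mCC; apply: lg_gen; right; left; exists (y, x).
Qed.

Lemma edgeG x y : edge Green x y -> y = x.
Proof. by case/andP => /eqP. Qed.

Definition F a b := [/\ a != b, L (mB a b) & L (mC a b)].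
Definition Seed := exists a b, F a b.

Lemma F_sym a b : F a b -> F b a.
Proof.
case=> ab hb hc; split; first by rewrite eq_sym.
  by rewrite mBN; apply: lgN.
by rewrite mCC.
Qed.

Lemma F_trans a b c : F a b -> F b c -> a != c -> F a c.
Proof.
case=> ab hb hc [bc hb' hc'] ac; split => //.
  by rewrite -(cBB R ab bc ac); apply: lgC.
by rewrite -(cBC R ab bc ac); apply: lgC.
Qed.

Lemma F_D a b : F a b -> L (mD a b).
Proof. by case=> ab hb hc; apply: lg2; rewrite -cBC2 //; apply: lgC. Qed.

Lemma prop_edge a b y : F a b -> L (mB b y) \/ L (mC b y) -> b != y -> F b y.
Proof.
move=> Fab hy bny.
have [->|ya] := eqVneq y a; first exact: F_sym.
have hD := F_D Fab; case: Fab => ab _ _.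
have ay : a != y by rewrite eq_sym.
case: hy => h; split => //.
- by rewrite -[mC b y]opprK -(cDB3 R ab bny ay); apply: lgN; apply: lgC.
- by rewrite -(cDC3 R ab bny ay); apply: lgC.
Qed.

Lemma walk_ind (P : 'I_n -> bool -> Prop) x s p :
  (forall c y z q, P y q -> edge c y z -> P z (q (+) is_red c)) ->
  P x p -> walk x s -> P (walk_end x s) (p (+) nred s).
Proof.
move=> st; elim: s x p => [|[c y] s IH] x p Px /=; first by rewrite addbF.
case/andP => e w; have := IH y (p (+) is_red c) (st _ _ _ _ Px e) w.
by rewrite oddD oddb addbA.
Qed.

Lemma qwalk a s : walk a s ->
  Seed \/ (walk_end a s = a /\ nred s = false) \/
  (walk_end a s != a /\ if nred s then L (mC a (walk_end a s)) else L (mB a (walk_end a s))).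
Proof.
move=> w.
have := @walk_ind (fun x q => Seed \/ (x = a /\ q = false) \/
   (x != a /\ if q then L (mC a x) else L (mB a x))) a s false.
rewrite addFb; apply => //; last by right; left.
move=> c y z q [Hs|[[-> ->]|[ya Hq]]] e; first by left.
- case: c e => e /=.
  + by have [az Lb] := edgeB e; right; right; rewrite eq_sym.
  + by have [az Lb] := edgeR e; right; right; rewrite eq_sym.
  + by rewrite (edgeG e); right; left.
- have ay : a != y by rewrite eq_sym.
  case: c e => e /=.
  + have [yz Lb] := edgeB e; rewrite addbF.
    have [ez|za] := eqVneq z a.
      subst z; case: q Hq => Hq; last by right; left.
      by left; exists a, y; split => //; rewrite mBN; apply: lgN.
    have az : a != z by rewrite eq_sym.
    right; right; split => //; case: q Hq => Hq.
      by rewrite -(cCB R ay yz az); apply: lgC.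
    by rewrite -(cBB R ay yz az); apply: lgC.
  + have [yz Lc] := edgeR e; rewrite addbT.
    have [ez|za] := eqVneq z a.
      subst z; case: q Hq => Hq; first by right; left.
      by left; exists a, y; split => //; rewrite mCC.
    have az : a != z by rewrite eq_sym.
    right; right; split => //; case: q Hq => Hq /=.
      by rewrite -[mB a z]opprK -(cCC R ay yz az); apply: lgN; apply: lgC.
    by rewrite -(cBC R ay yz az); apply: lgC.
  + by rewrite (edgeG e) addbF; right; right.
Qed.

Hypothesis conn : connected_graph E1 E2 E3.

Lemma edge_L c y z : edge c y z -> y = z \/ (y != z /\ (L (mB y z) \/ L (mC y z))).
Proof.
case: c => e.
- by have [? ?] := edgeB e; right; split => //; left.
- by have [? ?] := edgeR e; right; split => //; right.
- by left; rewrite (edgeG e).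
Qed.

Lemma allF : Seed -> forall a b, a != b -> F a b.
Proof.
move=> [a0 [b0 Fab]].
have N : forall v, exists w, F v w.
  move=> v; have [s [w <-]] := conn a0 v.
  have := @walk_ind (fun x _ => exists w, F x w) a0 s false.
  apply => //; last by exists b0.
  move=> c y z q [w' Fw] e; case: (edge_L e) => [<-|[yz hy]]; first by exists w'.
  by exists y; apply: F_sym; apply: (prop_edge (F_sym Fw)).
move=> a b ab; have [s [w eb]] := conn a b.
have step : forall c y z (q : bool), y = a \/ F a y -> edge c y z -> z = a \/ F a z.
  move=> c y z q hy e; case: (edge_L e) => [<-|[yz hz]] //.
  case: hy => [ya|Fay].
    subst y; right; have [w' Fw] := N a.
    exact: (prop_edge (F_sym Fw)).
  have Fyz := prop_edge Fay hz yz.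
  have [->|za] := eqVneq z a; first by left.
  by right; apply: (F_trans Fay Fyz); rewrite eq_sym.
have := @walk_ind (fun x _ => x = a \/ F a x) a s false step (or_introl erefl) w.
rewrite eb; case => // ba; by move: ab; rewrite ba eqxx.
Qed.
End G.

Section SU.
Variables (R : realType) (n : nat).
Local Notation C := (R[i]).
Local Notation M := ('M[C]_n).
Local Notation dl := (@delta_mx C n n).
Local Notation mB := (@matB R n).
Local Notation mC := (@matC R n).
Local Notation mD := (@matD R n).
Local Notation comm := (@comm R n).
Local Notation ii := (@ii R).

Lemma suE (A : M) : in_su A <-> (forall u v, Num.conj (A v u) = - A u v) /\ \tr A = 0.
Proof.
split => [[h t]|[h t]]; split => //.
  by move=> u v; have /matrixP/(_ u v) := h; rewrite !mxE.
by apply/matrixP => u v; rewrite !mxE h.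
Qed.

Lemma conjD (x y : C) : Num.conj (x + y) = Num.conj x + Num.conj y. Proof. exact: rmorphD. Qed.
Lemma conjB (x y : C) : Num.conj (x - y) = Num.conj x - Num.conj y. Proof. exact: rmorphB. Qed.
Lemma conjM (x y : C) : Num.conj (x * y) = Num.conj x * Num.conj y. Proof. exact: rmorphM. Qed.
Lemma conj0 : Num.conj (0 : C) = 0. Proof. exact: rmorph0. Qed.
Lemma conj_sum (F : 'I_n -> C) : Num.conj (\sum_k F k) = \sum_k Num.conj (F k). Proof. exact: rmorph_sum. Qed.

Lemma conj_ii : Num.conj (Complex 0 1 : C) = - Complex 0 1.
Proof. by rewrite complexiE conjCi. Qed.

Lemma conj_iiM z : Num.conj ((Complex 0 1 : C) * z) = - Complex 0 1 * Num.conj z.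
Proof. rewrite rmorphM; congr (_ * _); exact: conj_ii. Qed.

Lemma conj_re (r : R) : Num.conj (Complex r 0 : C) = Complex r 0.
Proof. by apply: conj_Creal; rewrite complex_real. Qed.

Lemma tr_dl a : \tr (dl a a) = 1.
Proof.
rewrite /mxtrace (bigD1 a) //= big1 ?addr0 => [|i ia]; rewrite !mxE ?eqxx //.
by rewrite (negbTE ia).
Qed.

Ltac casebool := repeat match goal with
 | H : is_true (?x != ?x) |- _ => by rewrite eqxx in H
 | |- context [?x == ?x] => rewrite eqxx
 | |- context [?x == ?y] => let E := fresh "E" in case: (eqVneq x y) => E; [subst | rewrite ?(negbTE E)]
 end.

Lemma su_B a b : a != b -> in_su (mB a b).
Proof.
move=> ab; apply/suE; split.
  move=> u v; rewrite !mxE rmorphB !rmorph_nat; casebool; rewrite /=; ring.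
rewrite /mxtrace big1 // => i _; rewrite !mxE; casebool; rewrite /=; ring.
Qed.

Lemma su_C a b : a != b -> in_su (mC a b).
Proof.
move=> ab; apply/suE; split.
  move=> u v; rewrite !mxE conj_iiM rmorphD !rmorph_nat; casebool; rewrite /=; ring.
rewrite /mxtrace big1 // => i _; rewrite !mxE; casebool; rewrite /=; ring.
Qed.

Lemma su_D a b : in_su (mD a b).
Proof.
apply/suE; split.
  move=> u v; rewrite !mxE conj_iiM rmorphB !rmorph_nat; casebool; rewrite /=; ring.
by rewrite mxtraceZ raddfB /= !tr_dl subrr mulr0.
Qed.

Lemma conj_mul (X Y : M) u v : (forall u v, Num.conj (X v u) = - X u v) ->
  (forall u v, Num.conj (Y v u) = - Y u v) ->
  Num.conj ((X *m Y) v u) = (Y *m X) u v.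
Proof.
move=> hX hY; rewrite !mxE conj_sum; apply: eq_bigr => k _.
by rewrite conjM hX hY mulrNN mulrC.
Qed.

Lemma su_closed (S : M -> Prop) : (forall A, S A -> in_su A) ->
  forall A, lie_gen S A -> in_su A.
Proof.
move=> hS A; elim => {A}.
- exact: hS.
- by apply/suE; split => [u v|]; rewrite ?mxE ?conj0 ?oppr0 // mxtrace0.
- move=> X Y _ /suE [hX tX] _ /suE [hY tY]; apply/suE; split.
    by move=> u v; rewrite !mxE conjD hX hY opprD.
  by rewrite mxtraceD tX tY addr0.
- move=> r X _ /suE [hX tX]; apply/suE; split.
    by move=> u v; rewrite !mxE conjM conj_re hX mulrN.
  by rewrite mxtraceZ tX mulr0.
- move=> X Y _ /suE [hX tX] _ /suE [hY tY]; apply/suE; split.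
    move=> u v; have e1 := conj_mul u v hX hY; have e2 := conj_mul u v hY hX.
    by move: e1 e2; rewrite !mxE conjB => -> ->; rewrite opprB.
  by rewrite raddfB /= mxtrace_mulC subrr.
Qed.
End SU.

Section CP.
Variable (R : realType).
Local Notation C := (R[i]).
Implicit Types (x y z w : C).
Local Notation reC := (@complex.Re R).
Local Notation imC := (@complex.Im R).
Lemma ReD x y : reC (x + y) = reC x + reC y. Proof. by case: x; case: y. Qed.
Lemma ImD x y : imC (x + y) = imC x + imC y. Proof. by case: x; case: y. Qed.
Lemma ReN x : reC (- x) = - reC x. Proof. by case: x. Qed.
Lemma ImN x : imC (- x) = - imC x. Proof. by case: x. Qed.
Lemma ReM x y : reC (x * y) = reC x * reC y - imC x * imC y. Proof. by case: x; case: y. Qed.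
Lemma ImM x y : imC (x * y) = reC x * imC y + imC x * reC y. Proof. by case: x => a b; case: y => c d /=; ring. Qed.
Lemma Re1 : reC (1 : C) = 1. Proof. by []. Qed.
Lemma Im1 : imC (1 : C) = 0. Proof. by []. Qed.
Lemma Re0 : reC (0 : C) = 0. Proof. by []. Qed.
Lemma Im0 : imC (0 : C) = 0. Proof. by []. Qed.
Lemma Re_nat k : reC (k%:R : C) = k%:R.
Proof. by elim: k => // k IH; rewrite !mulrS ReD IH. Qed.
Lemma Im_nat k : imC (k%:R : C) = 0.
Proof. by elim: k => // k IH; rewrite !mulrS ImD IH addr0. Qed.
Lemma c_ext x y : reC x = reC y -> imC x = imC y -> x = y.
Proof. by case: x; case: y => /= ? ? ? ? -> ->. Qed.
Lemma Re_sum (I : finType) (F : I -> C) : reC (\sum_i F i) = \sum_i reC (F i).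
Proof. exact: (big_morph _ ReD Re0). Qed.
Lemma Im_sum (I : finType) (F : I -> C) : imC (\sum_i F i) = \sum_i imC (F i).
Proof. exact: (big_morph _ ImD Im0). Qed.
Lemma conj_comp z : Num.conj z = Complex (reC z) (- imC z).
Proof.
case: z => a b /=.
have -> : Complex a b = Complex a 0 + Complex 0 1 * Complex b 0.
  by apply: c_ext; rewrite ?ReD ?ImD ?ReM ?ImM /=; ring.
rewrite conjD conjM !conj_re conj_ii.
by apply: c_ext; rewrite ?ReD ?ImD ?ReM ?ImM ?ReN ?ImN /=; ring.
Qed.
End CP.

Section Span.
Variables (R : realType) (n : nat).
Local Notation C := (R[i]).
Local Notation M := ('M[C]_n).
Local Notation mB := (@matB R n).
Local Notation mC := (@matC R n).
Local Notation mD := (@matD R n).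
Local Notation reC := (@complex.Re R).
Local Notation imC := (@complex.Im R).
Variable S : M -> Prop.
Local Notation L := (lie_gen S).

Ltac casebool := repeat match goal with
 | H : is_true (?x != ?x) |- _ => by rewrite eqxx in H
 | |- context [?x == ?x] => rewrite eqxx
 | |- context [?x == ?y] => let E := fresh "E" in case: (eqVneq x y) => E; [subst | rewrite ?(negbTE E)]
 end.

Lemma lg_sum (I : finType) (F : I -> M) : (forall i, L (F i)) -> L (\sum_i F i).
Proof. by move=> h; apply: big_ind => //; [exact: lg_zero | exact: lg_add]. Qed.

Lemma span (l : 'I_n) (A : M) : (forall a b, a != b -> L (mB a b) /\ L (mC a b)) ->
  in_su A -> L A.
Proof.
move=> hF /suE [hA tA].
have hre u v : reC (A v u) = - reC (A u v).
  by have := congr1 (@complex.Re R) (hA u v); rewrite conj_comp ReN.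
have him u v : imC (A v u) = imC (A u v).
  by have := congr1 (@complex.Im R) (hA u v); rewrite conj_comp ImN /= => /oppr_inj.
have hd u : reC (A u u) = 0.
  by have := hre u u => /eqP; rewrite -subr_eq0 opprK -mulr2n mulrn_eq0 /= => /eqP.
have hsum : \sum_a imC (A a a) = 0 by rewrite -Im_sum -/(\tr A) tA.
pose G (p : 'I_n * 'I_n) : M := if p.1 == p.2 then (Complex (imC (A p.1 p.1)) 0 : C) *: mD p.1 l
  else (Complex (reC (A p.1 p.2) / 2) 0 : C) *: mB p.1 p.2 + (Complex (imC (A p.1 p.2) / 2) 0 : C) *: mC p.1 p.2.
have -> : A = \sum_p G p.
  apply/matrixP => u v; rewrite summxE.
  have Goff a b u' v' : (a, b) != (u', v') -> (a, b) != (v', u') -> u' != v' -> G (a, b) u' v' = 0.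
    move=> h1 h2 uv; rewrite /G /=; case: eqVneq => [e|ab].
      subst b; rewrite !mxE; casebool; rewrite /=; ring.
    rewrite !mxE; casebool; rewrite /=; ring.
  have Gdiag a b u' : a != b -> G (a, b) u' u' = 0.
    move=> ab; rewrite /G /= (negbTE ab) !mxE.
    casebool; rewrite /=; ring.
  case: (eqVneq u v) => [<-|uv].
    case: (eqVneq u l) => [->|ul].
      have -> : \sum_p G p l l = \sum_a \sum_b G (a,b) l l.
        by rewrite pair_bigA; apply: eq_bigr => -[a b].
      have -> : \sum_a \sum_b G (a,b) l l = \sum_a G (a,a) l l.
        apply: eq_bigr => a _; rewrite (bigD1 a) //= big1 ?addr0 // => b ba.
        by apply: Gdiag; rewrite eq_sym.
      apply: c_ext; rewrite ?Re_sum ?Im_sum.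
        rewrite hd; symmetry; apply: big1 => a _; rewrite /G /= eqxx !mxE.
        casebool; rewrite /= ?mulr1n ?mulr0n; 
        rewrite ?(ReD, ImD, ReM, ImM, ReN, ImN, Re1, Im1, Re0, Im0) /=; ring.
      have -> : \sum_a imC (G (a, a) l l) = \sum_a imC (A a a) * ((l == a)%:R - 1).
        apply: eq_bigr => a _; rewrite /G /= eqxx !mxE.
        casebool; rewrite /= ?mulr1n ?mulr0n;
        rewrite ?(ReD, ImD, ReM, ImM, ReN, ImN, Re1, Im1, Re0, Im0) /=; ring.
      rewrite (bigD1 l) //= eqxx; move: hsum; rewrite (bigD1 l) //= => /eqP; rewrite addr_eq0 => /eqP hs.
      under eq_bigr => a al do rewrite eq_sym (negbTE al) mulr0n sub0r mulrN1.
      rewrite sumrN hs; ring.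
    rewrite (bigD1 (u,u)) //= big1 ?addr0.
      rewrite /G /= eqxx !mxE; casebool; rewrite /= !mulr1n !mulr0n.
      apply: c_ext; rewrite ?(ReD, ImD, ReM, ImM, ReN, ImN, Re1, Im1, Re0, Im0) /= ?hd; ring.
    move=> -[a b] /= ne; case: (eqVneq a b) => [e|ab]; last exact: Gdiag.
    subst b; rewrite /G /= eqxx !mxE; casebool; rewrite /=; ring.
  rewrite (bigD1 (u,v)) //= (bigD1 (v,u)) /=; last first.
    by apply/eqP => -[e _]; move: uv; rewrite e eqxx.
  rewrite big1 ?addr0; last first.
    move=> -[a b] /= /andP [h1 h2]; apply: Goff => //.
  rewrite /G /= (negbTE uv) eq_sym (negbTE uv) !mxE; casebool; rewrite /= !mulr1n !mulr0n.
  apply: c_ext; rewrite ?(ReD, ImD, ReM, ImM, ReN, ImN, Re1, Im1, Re0, Im0) /= hre him; by field.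

apply: lg_sum => -[a b]; rewrite /G /=.
case: eqVneq => [_|ab]; last first.
  by have [hb hc] := hF _ _ ab; apply: lg_add; apply: lg_scale.
apply: lg_scale; case: (eqVneq a l) => [->|al].
  by rewrite /matD subrr scaler0; exact: lg_zero.
have [hb hc] := hF _ _ al; apply: lg2; rewrite -cBC2 //; exact: lg_br.
Qed.
End Span.

Section Nec.
Variables (R : realType) (n : nat) (E1 E2 E3 : {set 'I_n * 'I_n}).
Hypothesis h1 : forall p, p \in E1 -> (p.1 < p.2)%N.
Hypothesis h2 : forall p, p \in E2 -> (p.1 < p.2)%N.
Hypothesis h3 : forall p, p \in E3 -> (p.1 < p.2)%N.
Local Notation C := (R[i]).
Local Notation M := ('M[C]_n).
Local Notation mB := (@matB R n).
Local Notation mC := (@matC R n).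
Local Notation mD := (@matD R n).
Local Notation S := (@gen_set R n E1 E2 E3).
Local Notation L := (lie_gen S).
Local Notation edge := (colored_edge E1 E2 E3).
Local Notation walk := (is_walk E1 E2 E3).
Local Notation nred s := (odd (count (fun q : color * 'I_n => is_red q.1) s)).
Local Notation reC := (@complex.Re R).
Local Notation imC := (@complex.Im R).
Implicit Types (x y z : 'I_n) (s t : seq (color * 'I_n)) (c : color).

Lemma walk_cat x s (s' : seq (color * 'I_n)) : walk x (s ++ s') = walk x s && walk (walk_end x s) s'.
Proof. by elim: s x => [|[c y] s IH] x //=; rewrite IH andbA. Qed.

Lemma walk_end_cat x s (s' : seq (color * 'I_n)) : walk_end x (s ++ s') = walk_end (walk_end x s) s'.
Proof. by rewrite /walk_end map_cat last_cat. Qed.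

Lemma walk_snoc x s c z : walk x s -> edge c (walk_end x s) z ->
  walk x (rcons s (c, z)) /\ walk_end x (rcons s (c, z)) = z.
Proof.
move=> w e; rewrite -cats1 walk_cat walk_end_cat w /= e; split => //.
Qed.

Lemma nred_snoc s c z : nred (rcons s (c, z)) = nred s (+) is_red c.
Proof. by rewrite -cats1 count_cat oddD /= addn0 oddb. Qed.

Definition reach x v := exists s, walk x s /\ walk_end x s = v.

Lemma reach_step x y c z : reach x y -> edge c y z -> reach x z.
Proof.
move=> [s [w <-]] e; have [w' e'] := walk_snoc w e; by exists (rcons s (c, z)).
Qed.

Definition InvR x (A : M) := forall a b, reach x a -> ~ reach x b -> A a b = 0.

Lemma invR_L x A : L A -> InvR x A.
Proof.
elim => {A}.
- move=> A [[p hp ->]|[[p hp ->]|[p hp ->]]] a b ra nb; rewrite !mxE.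
  + have e12 : edge Blue p.1 p.2 by rewrite /= -surjective_pairing hp.
    have e21 : edge Blue p.2 p.1 by rewrite /= -surjective_pairing hp orbT.
    case: (boolP ((a == p.1) && (b == p.2))) => [/andP [/eqP ea /eqP eb]|h].
      by subst; case: nb; apply: reach_step ra e12.
    case: (boolP ((a == p.2) && (b == p.1))) => [/andP [/eqP ea /eqP eb]|h'].
      by subst; case: nb; apply: reach_step ra e21.
    rewrite /=; ring.
  + have e12 : edge Red p.1 p.2 by rewrite /= -surjective_pairing hp.
    have e21 : edge Red p.2 p.1 by rewrite /= -surjective_pairing hp orbT.
    case: (boolP ((a == p.1) && (b == p.2))) => [/andP [/eqP ea /eqP eb]|h].
      by subst; case: nb; apply: reach_step ra e12.
    case: (boolP ((a == p.2) && (b == p.1))) => [/andP [/eqP ea /eqP eb]|h'].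
      by subst; case: nb; apply: reach_step ra e21.
    rewrite /=; ring.
  + case: (boolP ((a == p.1) && (b == p.1))) => [/andP [/eqP ea /eqP eb]|h].
      by subst; case: nb.
    case: (boolP ((a == p.2) && (b == p.2))) => [/andP [/eqP ea /eqP eb]|h'].
      by subst; case: nb.
    rewrite /=; ring.
- by move=> a b _ _; rewrite mxE.
- by move=> X Y _ hX _ hY a b ra nb; rewrite mxE hX // hY // addr0.
- by move=> r X _ hX a b ra nb; rewrite mxE hX // mulr0.
- move=> X Y _ hX _ hY a b ra nb.
  have hp (P Q : M) : InvR x P -> InvR x Q -> (P *m Q) a b = 0.
    move=> hP hQ; rewrite mxE big1 // => k _.
    case: (Classical_Prop.classic (reach x k)) => rk.
      by rewrite (hQ k b rk nb) mulr0.
    by rewrite (hP a k ra rk) mul0r.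
  by move: (hp X Y hX hY) (hp Y X hY hX); rewrite !mxE => -> ->; rewrite subrr.
Qed.

Lemma nec_conn : (forall A, L A <-> in_su A) -> connected_graph E1 E2 E3.
Proof.
move=> H x y; apply: Classical_Prop.NNPP => ny.
have nr : ~ reach x y by [].
have xy : x != y.
  by apply/eqP => e; apply: nr; exists [::]; rewrite e.
have /H := su_B R xy => /(@invR_L x _) /(_ x y).
have rx : reach x x by exists [::].
move=> /(_ rx nr) /eqP; rewrite !mxE eqxx (negbTE xy) /= subr0.
by rewrite eqxx oner_eq0.
Qed.
End Nec.

Section Par.
Variables (R : realType) (n : nat) (E1 E2 E3 : {set 'I_n * 'I_n}).
Hypothesis h1 : forall p, p \in E1 -> (p.1 < p.2)%N.
Hypothesis h2 : forall p, p \in E2 -> (p.1 < p.2)%N.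
Hypothesis h3 : forall p, p \in E3 -> (p.1 < p.2)%N.
Local Notation C := (R[i]).
Local Notation M := ('M[C]_n).
Local Notation mB := (@matB R n).
Local Notation mC := (@matC R n).
Local Notation mD := (@matD R n).
Local Notation S := (@gen_set R n E1 E2 E3).
Local Notation L := (lie_gen S).
Local Notation edge := (colored_edge E1 E2 E3).
Local Notation walk := (is_walk E1 E2 E3).
Local Notation nred s := (odd (count (fun q : color * 'I_n => is_red q.1) s)).
Local Notation reC := (@complex.Re R).
Local Notation imC := (@complex.Im R).
Implicit Types (x y z : 'I_n) (s t : seq (color * 'I_n)) (c : color).


Hypothesis conn : connected_graph E1 E2 E3.
Hypothesis noloop : ~ has_self_loop E1 E2 E3.
Hypothesis noodd : ~ has_odd_red_cycle E1 E2 E3.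

Lemma noodd' x s : walk x s -> walk_end x s = x -> nred s = false.
Proof. by move=> w e; apply/negbTE/negP => o; apply: noodd; exists x, s. Qed.

Definition typ (p : bool) (z : C) := if p then reC z = 0 else imC z = 0.

Lemma typ0 p : typ p 0. Proof. by case: p. Qed.
Lemma typD p (z w : C) : typ p z -> typ p w -> typ p (z + w).
Proof. by case: p => /=; rewrite ?ReD ?ImD => -> ->; rewrite addr0. Qed.
Lemma typN p (z : C) : typ p z -> typ p (- z).
Proof. by case: p => /=; rewrite ?ReN ?ImN => ->; rewrite oppr0. Qed.
Lemma typM p q (z w : C) : typ p z -> typ q w -> typ (p (+) q) (z * w).
Proof.
case: p; case: q => /= hz hw; rewrite ?ReM ?ImM hz hw; ring.
Qed.
Lemma typ_sum p (F : 'I_n -> C) : (forall k, typ p (F k)) -> typ p (\sum_k F k).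
Proof. by move=> h; apply: big_ind => //; [exact: typ0 | exact: typD]. Qed.

Definition InvP (A : M) := forall a b s, walk a s -> walk_end a s = b -> typ (nred s) (A a b).

Lemma invP_prod X Y : InvP X -> InvP Y -> InvP (X *m Y).
Proof.
move=> hX hY a b s w e; rewrite mxE; apply: typ_sum => k.
have [s1 [w1 e1]] := conn a k.
have [s2 [w2 e2]] := conn k b.
have [s3 [w3 e3]] := conn b a.
have c1 : nred (s1 ++ s2 ++ s3) = false.
  apply: (noodd' (x := a)); first by rewrite !walk_cat ?walk_end_cat e1 e2 w1 w2 w3.
  by rewrite !walk_end_cat e1 e2 e3.
have c2 : nred (s ++ s3) = false.
  apply: (noodd' (x := a)); first by rewrite !walk_cat e w w3.
  by rewrite !walk_end_cat e e3.
have -> : nred s = nred s1 (+) nred s2.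
  move: c1 c2; rewrite !count_cat !oddD => c1 c2.
  by move: c1 c2; case: (nred s); case: (nred s1); case: (nred s2); case: (nred s3).
exact: typM (hX _ _ _ w1 e1) (hY _ _ _ w2 e2).
Qed.

Lemma invP_L A : L A -> InvP A.
Proof.
elim => {A}.
- move=> A [[p hp ->]|[[p hp ->]|[p hp ->]]] a b s w e.
  + have e21 : edge Blue p.2 p.1 by rewrite /= -surjective_pairing hp orbT.
    have e12 : edge Blue p.1 p.2 by rewrite /= -surjective_pairing hp.
    rewrite !mxE; case hs: (nred s) => /=; last first.
      by rewrite ImD ImN !Im_nat subr0.
    case: (boolP ((a == p.1) && (b == p.2))) => [/andP [/eqP ea /eqP eb]|h].
      subst; have ee : edge Blue (walk_end p.1 s) p.1 by rewrite eb.
      have [w' e'] := walk_snoc w ee.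
      by move: (noodd' w' e'); rewrite nred_snoc hs.
    case: (boolP ((a == p.2) && (b == p.1))) => [/andP [/eqP ea /eqP eb]|h'].
      subst; have ee : edge Blue (walk_end p.2 s) p.2 by rewrite eb.
      have [w' e'] := walk_snoc w ee.
      by move: (noodd' w' e'); rewrite nred_snoc hs.
    rewrite /= subrr //.
  + have e21 : edge Red p.2 p.1 by rewrite /= -surjective_pairing hp orbT.
    have e12 : edge Red p.1 p.2 by rewrite /= -surjective_pairing hp.
    rewrite !mxE; case hs: (nred s) => /=.
      by rewrite ReM ImD !Im_nat /= ; ring.
    case: (boolP ((a == p.1) && (b == p.2))) => [/andP [/eqP ea /eqP eb]|h].
      subst; have ee : edge Red (walk_end p.1 s) p.1 by rewrite eb.
      have [w' e'] := walk_snoc w ee.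
      by move: (noodd' w' e'); rewrite nred_snoc hs.
    case: (boolP ((a == p.2) && (b == p.1))) => [/andP [/eqP ea /eqP eb]|h'].
      subst; have ee : edge Red (walk_end p.2 s) p.2 by rewrite eb.
      have [w' e'] := walk_snoc w ee.
      by move: (noodd' w' e'); rewrite nred_snoc hs.
    by rewrite !mulr0n addr0 mulr0.
  + case: noloop; exists Green, p.1; rewrite /= eqxx /=.
    by apply/existsP; exists p.2; rewrite -surjective_pairing hp.
- by move=> a b s _ _; rewrite mxE; exact: typ0.
- by move=> X Y _ hX _ hY a b s w e; rewrite mxE; apply: typD; [apply: hX | apply: hY].
- move=> r X _ hX a b s w e; rewrite mxE.
  have := hX a b s w e; case: (nred s) => /= h; rewrite ?ReM ?ImM /= h; ring.
- move=> X Y _ hX _ hY a b s w e.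
  have p1 := invP_prod hX hY w e; have p2 := invP_prod hY hX w e.
  by move: p1 p2; rewrite !mxE => p1 p2; apply: typD => //; apply: typN.
Qed.

Lemma nec_par : (2 <= n)%N -> (forall A, L A <-> in_su A) -> False.
Proof.
move=> n2 H.
pose a : 'I_n := Ordinal (ltn_trans (ltnSn 0) n2).
pose b : 'I_n := Ordinal n2.
have ab : a != b by [].
have /H /invP_L /(_ a a [::] erefl erefl) := su_D R a b.
rewrite /= !mxE eqxx (negbTE ab) /= !subr0 mul0r mul1r add0r => /eqP.
by rewrite oner_eq0.
Qed.
End Par.

Section Main.
Variables (R : realType) (n : nat) (E1 E2 E3 : {set 'I_n * 'I_n}).
Hypothesis h1 : forall p, p \in E1 -> (p.1 < p.2)%N.
Hypothesis h2 : forall p, p \in E2 -> (p.1 < p.2)%N.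
Hypothesis h3 : forall p, p \in E3 -> (p.1 < p.2)%N.
Local Notation mB := (@matB R n).
Local Notation mC := (@matC R n).
Local Notation mD := (@matD R n).
Local Notation S := (@gen_set R n E1 E2 E3).
Local Notation L := (lie_gen S).
Local Notation nred s := (odd (count (fun q : color * 'I_n => is_red q.1) s)).

Lemma seed_D : connected_graph E1 E2 E3 -> forall p, p \in E3 -> Seed R E1 E2 E3.
Proof.
move=> conn p hp; set x := p.1; set y := p.2.
have xy : x != y := ltn_neq (h3 hp).
have hD : L (mD x y) by apply: lg_gen; right; right; exists p.
have [s [w e]] := conn x y.
case: (qwalk R h1 h2 w) => [//|[[e' _]|[_]]].
  by move: xy; rewrite -e e' eqxx.
rewrite e; case: ifP => _ h.
  exists x, y; split => //; apply: lg2; rewrite -[_ *+ 2]opprK -(cDC R xy).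
  by apply: lgN; apply: lg_br.
exists x, y; split => //; apply: lg2; rewrite -(cDB R xy); by apply: lg_br.
Qed.

Lemma all_blue_count s : all (fun q : color * 'I_n => is_blue q.1) s -> nred s = false.
Proof.
suff : all (fun q : color * 'I_n => is_blue q.1) s -> count (fun q : color * 'I_n => is_red q.1) s = 0%N.
  by move=> h /h ->.
by elim: s => [|[c y] s IH] //=; case: c => //= /IH.
Qed.

Lemma suff_thm : (2 <= n)%N -> connected_graph E1 E2 E3 -> Seed R E1 E2 E3 ->
  forall A, L A <-> in_su A.
Proof.
move=> n2 conn sd A; split.
  apply: su_closed => B [[p hp ->]|[[p hp ->]|[p hp ->]]].
  - exact: su_B (ltn_neq (h1 hp)).
  - exact: su_C (ltn_neq (h2 hp)).
  - exact: su_D.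
apply: (span (Ordinal (ltn_trans (ltnSn 0) n2))) => a b ab.
by have [_ hb hc] := allF h1 h2 conn sd ab.
Qed.
End Main.
Unset Implicit Arguments. Set Strict Implicit.
Theorem proposition1 (R : realType) (n : nat) (E1 E2 E3 : {set 'I_n * 'I_n}) :
  (2 <= n)%N ->
  (forall p, p \in E1 -> (p.1 < p.2)%N) ->
  (forall p, p \in E2 -> (p.1 < p.2)%N) ->
  (forall p, p \in E3 -> (p.1 < p.2)%N) ->
  ((forall A : 'M[R[i]]_n, lie_gen (gen_set E1 E2 E3) A <-> in_su A) <->
   [\/ at_least_two_colors E1 E2 E3 /\ blue_connected E1 E2 E3,
       connected_graph E1 E2 E3 /\ has_self_loop E1 E2 E3
     | connected_graph E1 E2 E3 /\ has_odd_red_cycle E1 E2 E3]).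
Proof.
move=> n2 h1 h2 h3; split.
  move=> H; have conn := nec_conn H.
  case: (Classical_Prop.classic (has_self_loop E1 E2 E3)) => hl; first exact: Or32.
  case: (Classical_Prop.classic (has_odd_red_cycle E1 E2 E3)) => ho; first exact: Or33.
  by case: (nec_par conn hl ho n2 H).
have loopE3 : has_self_loop E1 E2 E3 -> exists2 p, p \in E3 & True.
  move=> [c [x e]]; case: c e => /=.
  - by case/orP => /h1; rewrite ltnn.
  - by case/orP => /h2; rewrite ltnn.
  - case/andP => _ /existsP [z /orP [hz|hz]]; by eexists; first exact: hz.
case => [[[c1 [c2 [c12 hc1 hc2]]] bc]|[conn hl]|[conn ho]].
- have conn : connected_graph E1 E2 E3.
    by move=> x y; have [s [w _ e]] := bc x y; exists s.
  apply: suff_thm => //.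
  have : has_color E1 E2 E3 Red \/ has_color E1 E2 E3 Green.
    case: c1 c12 hc1 => c12 hc1; [|by left|by right].
    by case: c2 c12 hc2 => // _ hc2; [left|right].
  case => [[x [y e]]|[x [y e]]].
    have [xy hC] := edgeR R h2 e.
    have [s [w ab e']] := bc x y.
    case: (qwalk R h1 h2 w) => [//|[[e'' _]|[_]]].
      by move: xy; rewrite -e' e'' eqxx.
    by rewrite (all_blue_count ab) e' => hB; exists x, y; split.
  move: (e) => /andP [/eqP exy _]; subst y.
  have [p hp _] := loopE3 (ex_intro _ Green (ex_intro _ x e)).
  exact: (seed_D R h1 h2 h3 conn hp).
- apply: suff_thm => //; have [p hp _] := loopE3 hl; exact: (seed_D R h1 h2 h3 conn hp).
- apply: suff_thm => //; case: ho => x [s [w e o]].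
  case: (qwalk R h1 h2 w) => [//|[[_ e']|[e']]].
    by move: o; rewrite e'.
  by rewrite e eqxx in e'.
Qed.
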